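(* Fix an integer $n\ge 3$ and $p\in(0,1)$, and define for $x\in[2,n-1]$ \[ \varphi(x)=\Bigl(\Bigl(\tfrac{n}{n-1}\Bigr)^p-1\Bigr)^{1/(1-p)}(n-x)+\Bigl(\Bigl(\tfrac{n}{n-1}\Bigr)^p(x-1)-x+2\Bigr)^{1/(1-p)}(n-x+2)^{-p/(1-p)}. \] Then $\varphi$ is convex on $[2,n-1]$ and $\varphi(x)\le 1$ for all $x\in[2,n-1]$. *)

(* Defs.v *)
From Stdlib Require Import Reals.
Open Scope R_scope.

(* phi n p x as in the paper. All bases of real powers are positive on
   [2, n-1] (since (n/(n-1))^p >= 1), so Rpower is the usual real power. *)
Definition phi (n : nat) (p x : R) : R :=
  let c := Rpower (INR n / (INR n - 1)) p in
  Rpower (c - 1) (1 / (1 - p)) * (INR n - x)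
  + Rpower (c * (x - 1) - x + 2) (1 / (1 - p))
    * Rpower (INR n - x + 2) (- p / (1 - p)).

Definition convex_on (a b : R) (f : R -> R) : Prop :=
  forall x y t, a <= x <= b -> a <= y <= b -> 0 <= t <= 1 ->
    f (t * x + (1 - t) * y) <= t * f x + (1 - t) * f y.

(* Main.v *)
Require Import Defs.
From Stdlib Require Import Reals Lra Psatz.
Open Scope R_scope.

Lemma Rpower_pos' x y : 0 < Rpower x y.
Proof. unfold Rpower; apply exp_pos. Qed.

Lemma ln_le_sub1 y : 0 < y -> ln y <= y - 1.
Proof.
  intros Hy. pose proof (exp_ineq1_le (ln y)). rewrite exp_ln in H by lra. lra.
Qed.

Lemma amgm x p : 0 < x -> 0 <= p <= 1 -> Rpower x p <= p * x + (1 - p).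
Proof.
  intros Hx Hp. set (g := p * x + (1 - p)).
  assert (Hg : 0 < g) by (unfold g; nra).
  unfold Rpower. rewrite <- (exp_ln g) by exact Hg.
  assert (p * ln x <= ln g).
  { pose proof (ln_le_sub1 (x / g) ltac:(apply Rdiv_lt_0_compat; lra)).
    pose proof (ln_le_sub1 (/ g) ltac:(apply Rinv_0_lt_compat; lra)).
    unfold Rdiv in H; rewrite ln_mult, ln_Rinv in H by (try apply Rinv_0_lt_compat; lra). rewrite ln_Rinv in H0 by lra.
    assert (p * (x / g - 1) + (1 - p) * (/ g - 1) = 0) by (unfold g in *; field; lra).
    nra. }
  destruct (Rle_lt_or_eq_dec _ _ H) as [H'|H']. left; apply exp_increasing; exact H'.
  rewrite H'; lra.
Qed.

Lemma bern_up r a : 0 < r -> 1 <= a -> 1 + a * (r - 1) <= Rpower r a.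
Proof.
  intros Hr Ha. set (y := Rpower r a).
  pose proof (amgm y (/ a) (Rpower_pos' _ _)) as H.
  assert (0 <= / a <= 1).
  { split. left; apply Rinv_0_lt_compat; lra. rewrite <- Rinv_1. apply Rinv_le_contravar; lra. }
  specialize (H H0). unfold y in H. rewrite Rpower_mult in H.
  replace (a * / a) with 1 in H by (field; lra). rewrite Rpower_1 in H by lra.
  fold y in H. apply Rmult_le_compat_l with (r := a) in H; [|lra].
  replace (a * (/ a * y + (1 - / a))) with (y + a - 1) in H by (field; lra). lra.
Qed.

Lemma tangent z z0 a : 0 < z -> 0 < z0 -> 1 <= a ->
  Rpower z0 a + a * Rpower z0 (a - 1) * (z - z0) <= Rpower z a.
Proof.
  intros Hz Hz0 Ha.
  pose proof (bern_up (z / z0) a ltac:(apply Rdiv_lt_0_compat; lra) Ha) as H.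
  replace z with (z0 * (z / z0)) at 2 by (field; lra).
  rewrite <- Rpower_mult_distr by (try apply Rdiv_lt_0_compat; lra).
  replace (a - 1) with (a + Ropp 1) by ring. rewrite Rpower_plus, Rpower_Ropp, Rpower_1 by lra.
  pose proof (Rpower_pos' z0 a).
  set (K := Rpower z0 a) in *. set (r := Rpower (z / z0) a) in *.
  replace (K + a * (K * / z0) * (z - z0)) with (K * (1 + a * (z / z0 - 1))) by (field; lra).
  apply Rmult_le_compat_l; lra.
Qed.

Definition P (a u v : R) := v * Rpower (u / v) a.

Lemma P_convex a u1 v1 u2 v2 t : 1 <= a -> 0 < u1 -> 0 < v1 -> 0 < u2 -> 0 < v2 -> 0 <= t <= 1 ->
  P a (t * u1 + (1 - t) * u2) (t * v1 + (1 - t) * v2) <= t * P a u1 v1 + (1 - t) * P a u2 v2.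
Proof.
  intros Ha Hu1 Hv1 Hu2 Hv2 Ht.
  set (U := t * u1 + (1 - t) * u2). set (V := t * v1 + (1 - t) * v2).
  assert (HU : 0 < U) by (unfold U; nra). assert (HV : 0 < V) by (unfold V; nra).
  set (z0 := U / V). assert (Hz0 : 0 < z0) by (apply Rdiv_lt_0_compat; lra).
  pose proof (tangent (u1 / v1) z0 a ltac:(apply Rdiv_lt_0_compat; lra) Hz0 Ha) as T1.
  pose proof (tangent (u2 / v2) z0 a ltac:(apply Rdiv_lt_0_compat; lra) Hz0 Ha) as T2.
  unfold P. fold z0.
  set (K1 := Rpower z0 a) in *. set (K2 := Rpower z0 (a - 1)) in *.
  set (R1 := Rpower (u1 / v1) a) in *. set (R2 := Rpower (u2 / v2) a) in *.
  assert (E1 : v1 * (K1 + a * K2 * (u1 / v1 - z0)) <= v1 * R1) by (apply Rmult_le_compat_l; lra).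
  assert (E2 : v2 * (K1 + a * K2 * (u2 / v2 - z0)) <= v2 * R2) by (apply Rmult_le_compat_l; lra).
  assert (Eq : t * (v1 * (K1 + a * K2 * (u1 / v1 - z0))) + (1 - t) * (v2 * (K1 + a * K2 * (u2 / v2 - z0))) = V * K1).
  { assert (Vz : V * z0 = U) by (unfold z0; field; lra).
    clearbody K1 K2 R1 R2 z0.
    assert (D : t * (v1 * (K1 + a * K2 * (u1 / v1 - z0))) + (1 - t) * (v2 * (K1 + a * K2 * (u2 / v2 - z0))) - V * K1 = a * K2 * (U - V * z0)).
    { unfold U, V. field. split; lra. }
    rewrite Vz in D. lra. }
  nra.
Qed.

Lemma Rpower_inv v a : 0 < v -> Rpower (/ v) a = / Rpower v a.
Proof. intros Hv. unfold Rpower. rewrite ln_Rinv by lra.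
  replace (a * - ln v) with (- (a * ln v)) by ring. apply exp_Ropp. Qed.

Lemma T2eq u v a : 0 < u -> 0 < v -> Rpower u a * Rpower v (1 - a) = P a u v.
Proof.
  intros Hu Hv. unfold P, Rdiv.
  rewrite <- Rpower_mult_distr by (try apply Rinv_0_lt_compat; lra).
  rewrite Rpower_inv by lra.
  replace (1 - a) with (1 + Ropp a) by ring. rewrite Rpower_plus, Rpower_Ropp, Rpower_1 by lra.
  pose proof (Rpower_pos' v a). field. lra.
Qed.

Theorem mainTheorem7 (n : nat) (p : R) :
  (3 <= n)%nat -> 0 < p < 1 ->
  convex_on 2 (INR n - 1) (phi n p) /\
  (forall x, 2 <= x <= INR n - 1 -> phi n p x <= 1).
Proof.
  intros Hn Hp.
  apply le_INR in Hn. simpl in Hn.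
  set (N := INR n) in *.
  set (a := 1 / (1 - p)).
  assert (Ha : 1 < a).
  { unfold a. apply (Rmult_lt_reg_r (1 - p)); [lra|]. field_simplify; lra. }
  assert (Hq : - p / (1 - p) = 1 - a) by (unfold a; field; lra).
  set (b := N / (N - 1)).
  assert (Hb : b = 1 + 1 / (N - 1)) by (unfold b; field; lra).
  assert (Hb1 : 1 < b).
  { rewrite Hb. assert (0 < 1 / (N - 1)) by (apply Rdiv_lt_0_compat; lra). lra. }
  set (c := Rpower b p).
  assert (Hc1 : 1 < c).
  { unfold c. rewrite <- (Rpower_O b) at 1 by lra. apply Rpower_lt; lra. }
  assert (Hc2 : c <= 1 + p / (N - 1)).
  { unfold c. rewrite Hb. pose proof (amgm (1 + 1 / (N - 1)) p ltac:(lra) ltac:(lra)).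
    replace (1 + p / (N - 1)) with (p * (1 + 1 / (N - 1)) + (1 - p)) by (field; lra). exact H. }
  set (al := c - 1).
  assert (Hphi : forall x, 1 <= x -> x < N + 2 ->
     phi n p x = Rpower al a * (N - x) + P a (al * (x - 1) + 1) (N - x + 2)).
  { intros x Hx1 Hx2. unfold phi. fold N b c a al. rewrite Hq.
    replace (c * (x - 1) - x + 2) with (al * (x - 1) + 1) by (unfold al; ring).
    rewrite T2eq; [reflexivity | unfold al; nra | lra]. }
  split.
  - intros x y t Hx Hy Ht.
    set (z := t * x + (1 - t) * y).
    assert (Hz : 2 <= z <= N - 1) by (unfold z; nra).
    rewrite !Hphi by lra.
    replace (al * (z - 1) + 1) with (t * (al * (x - 1) + 1) + (1 - t) * (al * (y - 1) + 1)) by (unfold z; ring).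
    replace (N - z + 2) with (t * (N - x + 2) + (1 - t) * (N - y + 2)) by (unfold z; ring).
    pose proof (P_convex a (al * (x - 1) + 1) (N - x + 2) (al * (y - 1) + 1) (N - y + 2) t
      ltac:(lra) ltac:(unfold al; nra) ltac:(lra) ltac:(unfold al; nra) ltac:(lra) Ht).
    replace (N - z) with (t * (N - x) + (1 - t) * (N - y)) by (unfold z; ring).
    nra.
  - intros x Hx. rewrite Hphi by lra.
    set (q := a - 1). assert (Hq0 : 0 < q) by (unfold q; lra).
    assert (Haq : a = 1 + q) by (unfold q; ring).
    set (K := Rpower ((1 + p) / 3) q).
    assert (Hal0 : 0 < al) by (unfold al; lra).
    assert (Halm : al * (N - 1) <= p).
    { assert (al <= p / (N - 1)) by (unfold al; lra).
      apply Rmult_le_compat_r with (r := N - 1) in H; [|lra].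
      replace (p / (N - 1) * (N - 1)) with p in H by (field; lra). exact H. }
    assert (T1 : Rpower al a * (N - x) <= al * (N - x) * K).
    { rewrite Haq, Rpower_plus, Rpower_1 by lra.
      assert (Rpower al q <= K).
      { unfold K. apply Rle_Rpower_l; [lra|]. split; [lra|]. nra. }
      assert (H0 : 0 <= al * (N - x)) by nra.
      pose proof (Rmult_le_compat_l _ _ _ H0 H).
      replace (al * Rpower al q * (N - x)) with (al * (N - x) * Rpower al q) by ring. lra. }
    set (u := al * (x - 1) + 1). set (v := N - x + 2).
    assert (Hu : 0 < u) by (unfold u; nra).
    assert (Hu2 : u <= 1 + p) by (unfold u; nra).
    assert (Hv : 3 <= v) by (unfold v; lra).
    assert (T2 : P a u v <= u * K).
    { unfold P. set (w := u / v).
      assert (Hw : u = w * v) by (unfold w; field; lra).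
      assert (Hw0 : 0 < w) by (unfold w; apply Rdiv_lt_0_compat; lra).
      assert (Hw1 : w <= (1 + p) / 3) by nra.
      rewrite Haq, Rpower_plus, Rpower_1 by lra.
      assert (Rpower w q <= K) by (unfold K; apply Rle_Rpower_l; lra).
      pose proof (Rpower_pos' w q). rewrite Hw. nra. }
    assert (HK : (1 + p) * K <= 1).
    { unfold K, Rdiv. rewrite <- Rpower_mult_distr by (try apply Rinv_0_lt_compat; lra).
      rewrite Rpower_inv by lra.
      assert (H3 : 1 + p <= Rpower 3 p).
      { unfold Rpower. pose proof (exp_ineq1_le (p * ln 3)).
        assert (1 <= ln 3).
        { rewrite <- ln_exp at 1. pose proof exp_le_3.
          destruct (Rle_lt_or_eq_dec _ _ H0) as [H1|H1].
          - left; apply ln_increasing; [apply exp_pos | exact H1].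
          - rewrite H1; lra. }
        nra. }
      assert (E : (1 + p) * Rpower (1 + p) q = Rpower (1 + p) a).
      { rewrite Haq, Rpower_plus, Rpower_1 by lra. reflexivity. }
      assert (E2 : Rpower 3 q = Rpower (Rpower 3 p) a).
      { rewrite Rpower_mult. f_equal. unfold q, a. field. lra. }
      assert (Rpower (1 + p) a <= Rpower 3 q).
      { rewrite E2. apply Rle_Rpower_l; lra. }
      pose proof (Rpower_pos' 3 q).
      rewrite <- Rmult_assoc, E.
      apply (Rmult_le_reg_r (Rpower 3 q)); [lra|].
      rewrite Rmult_assoc, Rinv_l by lra. lra. }
    assert (Hsum : al * (N - x) + u <= 1 + p) by (unfold u; nra).
    assert (0 <= K) by (left; apply Rpower_pos').
    nra.
Qed.
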